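(* Let $\mathcal O\subset\mathbb R^2$ be a connected open set and let $\mathcal M=(\mathcal O,\Gamma)$ be an affine surface. Suppose there exist pairwise distinct real linear functions $L_1,L_2,L_3$ such that $\{e^{L_1},e^{L_2},e^{L_3}\}$ is a basis of $\mathcal Q(\mathcal M)$. Then $\Gamma$ has constant Christoffel symbols (i.e. is Type $\mathcal A$), and $\Gamma$ is linearly equivalent to one of: $\Gamma_r^2(a_1,a_2)$ for some $a_1,a_2$ with $a_1+a_2\neq1$ and $a_1a_2\neq0$; $\Gamma_2^1(c)$ for some $c\notin\{-1,0\}$; or $\Gamma_2^0$.
   Context: An affine manifold $(M,\nabla)$ is a smooth manifold $M$ of dimension $m\ge 2$ with a torsion-free connection $\nabla$ on $TM$; in local coordinates $\nabla_{\partial_{x^i}}\partial_{x^j}=\Gamma_{ij}^k\partial_{x^k}$ (summation over repeated indices). The curvature is $R(X,Y)Z=\nabla_X\nabla_YZ-\nabla_Y\nabla_XZ-\nabla_{[X,Y]}Z$, the Ricci tensor is $\rho(Y,Z)=\mathrm{Tr}(X\mapsto R(X,Y)Z)$, and $\rho_s(X,Y)=\frac12(\rho(X,Y)+\rho(Y,X))$. The Hessian is $\mathcal H_\nabla f=(\partial_{x^i}\partial_{x^j}f-\Gamma_{ij}^k\partial_{x^k}f)\,dx^i\otimes dx^j$. The quasi-Einstein solution space is $\mathcal Q(M,\nabla)=\{f\in C^\infty(M):\mathcal H_\nabla f+\frac{1}{m-1}f\rho_s=0\}$. For real constants, $\Gamma(a,b,c,d,e,f)$ denotes the connection on (an open subset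 of) $\mathbb R^2$ whose Christoffel symbols in the standard coordinates $(x^1,x^2)$ are the constants $\Gamma_{11}^1=a$, $\Gamma_{11}^2=b$, $\Gamma_{12}^1=\Gamma_{21}^1=c$, $\Gamma_{12}^2=\Gamma_{21}^2=d$, $\Gamma_{22}^1=e$, $\Gamma_{22}^2=f$; multiplying $\Gamma(\dots)$ by a scalar multiplies all six entries. Two connections with constant Christoffel symbols are linearly equivalent if they differ by a linear change of coordinates, i.e. there is $T\in GL(2,\mathbb R)$ with $T^*\nabla_2=\nabla_1$. A real linear function is $L(x^1,x^2)=\alpha_1x^1+\alpha_2x^2$, $\alpha_i\in\mathbb R$. The specific connections: for $a_1+a_2\ne1$, $\Gamma_r^2(a_1,a_2):=\frac{1}{a_1+a_2-1}\Gamma(a_1^2+a_2-1,\ a_1^2-a_1,\ a_1a_2,\ a_1a_2,\ a_2^2-a_2,\ a_1+a_2^2-1)$; for $c\ne-1$, $\Gamma_2^1(c):=\Gamma(-1,0,c,0,0,1+2c)$; $\Gamma_2^0:=\Gamma(-1,0,0,0,0,1)$. *)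

(* Defs.v *)
From Stdlib Require Import Reals.
Open Scope R_scope.

Inductive idx : Type := I1 | I2.

Definition S2 (F : idx -> R) : R := F I1 + F I2.

Definition region := R -> R -> Prop.

Definition open2 (O : region) : Prop :=
  forall x y, O x y -> exists d, 0 < d /\
    forall u v, Rabs (u - x) < d -> Rabs (v - y) < d -> O u v.

Definition connected2 (O : region) : Prop :=
  forall U V : region, open2 U -> open2 V ->
    (forall x y, O x y -> U x y \/ V x y) ->
    (forall x y, O x y -> U x y -> V x y -> False) ->
    (forall x y, O x y -> ~ U x y) \/ (forall x y, O x y -> ~ V x y).

Definition cont_on (O : region) (f : R -> R -> R) : Prop :=
  forall x y, O x y -> forall eps, 0 < eps -> exists d, 0 < d /\
    forall u v, O u v -> Rabs (u - x) < d -> Rabs (v - y) < d ->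
      Rabs (f u v - f x y) < eps.

Definition is_partial (O : region) (f : R -> R -> R) (i : idx) (g : R -> R -> R) : Prop :=
  forall x y, O x y ->
    match i with
    | I1 => derivable_pt_lim (fun t => f t y) x (g x y)
    | I2 => derivable_pt_lim (fun t => f x t) y (g x y)
    end.

(* C^infinity on O: continuous, and both partial derivatives exist on O and
   are again C^infinity. *)
CoInductive smooth (O : region) (f : R -> R -> R) : Prop :=
  smooth_intro : cont_on O f ->
    (forall i, exists g, is_partial O f i g /\ smooth O g) -> smooth O f.

(* Christoffel symbols: Gam i j k = Gamma_{ij}^k, as functions on R^2. *)
Definition connection := idx -> idx -> idx -> R -> R -> R.

(* (O, Gam) is an affine surface: smooth torsion-free connection on O. *)
Definition affine_surface (O : region) (Gam : connection) : Prop :=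
  open2 O /\
  (forall i j k, smooth O (Gam i j k)) /\
  (forall i j k x y, O x y -> Gam i j k x y = Gam j i k x y).

(* Ricci tensor in coordinates, given dG i j k l = d_{x^l} Gamma_{ij}^k:
   rho_{ij} = sum_k ( d_k G_{ij}^k - d_i G_{kj}^k
                      + sum_l (G_{ij}^l G_{kl}^k - G_{kj}^l G_{il}^k) ). *)
Definition ricci (Gam : connection) (dG : idx -> idx -> idx -> idx -> R -> R -> R)
  (i j : idx) (x y : R) : R :=
  S2 (fun k => dG i j k k x y - dG k j k i x y
     + S2 (fun l => Gam i j l x y * Gam k l k x y - Gam k j l x y * Gam i l k x y)).

Definition ricci_s Gam dG i j x y : R :=
  (ricci Gam dG i j x y + ricci Gam dG j i x y) / 2.

(* Hessian, given df a = d_a f and ddf a b = d_b d_a f: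
   H_{ij} = d_i d_j f - Gamma_{ij}^k d_k f. *)
Definition hessian (Gam : connection) (df : idx -> R -> R -> R)
  (ddf : idx -> idx -> R -> R -> R) (i j : idx) (x y : R) : R :=
  ddf j i x y - S2 (fun k => Gam i j k x y * df k x y).

(* Quasi-Einstein solution space, m = 2 so 1/(m-1) = 1.  The derivatives are
   quantified universally; for smooth f and Gam on open O they exist and are
   unique on O. *)
Definition in_Q (O : region) (Gam : connection) (f : R -> R -> R) : Prop :=
  smooth O f /\
  forall (dG : idx -> idx -> idx -> idx -> R -> R -> R)
         (df : idx -> R -> R -> R) (ddf : idx -> idx -> R -> R -> R),
    (forall i j k l, is_partial O (Gam i j k) l (dG i j k l)) ->
    (forall a, is_partial O f a (df a)) ->
    (forall a b, is_partial O (df a) b (ddf a b)) ->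
    forall i j x y, O x y ->
      hessian Gam df ddf i j x y + (1 / (2 - 1)) * f x y * ricci_s Gam dG i j x y = 0.

Definition linfun (al1 al2 : R) : R -> R -> R := fun x y => al1 * x + al2 * y.

Definition expL (al1 al2 : R) : R -> R -> R := fun x y => exp (linfun al1 al2 x y).

Definition basis3_of_Q (O : region) (Gam : connection) (f1 f2 f3 : R -> R -> R) : Prop :=
  in_Q O Gam f1 /\ in_Q O Gam f2 /\ in_Q O Gam f3 /\
  (forall c1 c2 c3 : R,
     (forall x y, O x y -> c1 * f1 x y + c2 * f2 x y + c3 * f3 x y = 0) ->
     c1 = 0 /\ c2 = 0 /\ c3 = 0) /\
  (forall f, in_Q O Gam f -> exists c1 c2 c3 : R,
     forall x y, O x y -> f x y = c1 * f1 x y + c2 * f2 x y + c3 * f3 x y).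

Definition const_conn := idx -> idx -> idx -> R.

Definition GammaC (a b c d e f : R) : const_conn :=
  fun i j k =>
    match i, j, k with
    | I1, I1, I1 => a
    | I1, I1, I2 => b
    | I1, I2, I1 | I2, I1, I1 => c
    | I1, I2, I2 | I2, I1, I2 => d
    | I2, I2, I1 => e
    | I2, I2, I2 => f
    end.

Definition scale_conn (s : R) (C : const_conn) : const_conn := fun i j k => s * C i j k.

Definition Gamma_r2 (a1 a2 : R) : const_conn :=
  scale_conn (1 / (a1 + a2 - 1))
    (GammaC (a1 ^ 2 + a2 - 1) (a1 ^ 2 - a1) (a1 * a2) (a1 * a2) (a2 ^ 2 - a2) (a1 + a2 ^ 2 - 1)).

Definition Gamma_21 (c : R) : const_conn := GammaC (-1) 0 c 0 0 (1 + 2 * c).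

Definition Gamma_20 : const_conn := GammaC (-1) 0 0 0 0 1.

(* Linear equivalence: there is T in GL(2,R) with T^* nabla2 = nabla1, i.e. the
   linear map x = T y is affine from (C1) to (C2):
   dT(nabla1_{d_i} d_j) = nabla2_{dT d_i} dT d_j, in coordinates
   sum_k T^m_k C1_{ij}^k = sum_{a,b} T^a_i T^b_j C2_{ab}^m. *)
Definition lin_equiv (C1 C2 : const_conn) : Prop :=
  exists T : idx -> idx -> R,
    T I1 I1 * T I2 I2 - T I1 I2 * T I2 I1 <> 0 /\
    forall i j m,
      S2 (fun k => T m k * C1 i j k) =
      S2 (fun a => S2 (fun b => T a i * T b j * C2 a b m)).

(* Main.v *)
Require Import Defs.
From Stdlib Require Import Reals Lra Psatz ClassicalEpsilon Classical.
Open Scope R_scope.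

Definition vec (a b : R) : idx -> R := fun i => match i with I1 => a | I2 => b end.
Definition EQ (C : const_conn) (r : idx -> idx -> R) (v : idx -> R) : Prop :=
  forall i j, v i * v j - S2 (fun k => C i j k * v k) + r i j = 0.
Definition Dt (a1 b1 a2 b2 a3 b3 : R) : R := (a2-a1)*(b3-b1) - (a3-a1)*(b2-b1).
Definition pull (T : idx -> idx -> R) (b : idx -> R) : idx -> R :=
  fun k => S2 (fun m => b m * T m k).

Lemma lc (g c e : R) : e = 0 -> g - c * e = 0 -> g = 0.
Proof. intros -> H. lra. Qed.

Lemma affine_unique u v w a1 b1 a2 b2 a3 b3 :
  Dt a1 b1 a2 b2 a3 b3 <> 0 ->
  u*a1+v*b1+w = 0 -> u*a2+v*b2+w = 0 -> u*a3+v*b3+w = 0 ->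
  u = 0 /\ v = 0 /\ w = 0.
Proof.
  unfold Dt; intros HD E1 E2 E3.
  assert (Hu : ((a2-a1)*(b3-b1) - (a3-a1)*(b2-b1)) * u = 0).
  { apply (lc _ (b3-b1) _ E2). apply (lc _ (-(b2-b1)) _ E3).
    apply (lc _ (b2-b1-(b3-b1)) _ E1). ring. }
  assert (Hv : ((a2-a1)*(b3-b1) - (a3-a1)*(b2-b1)) * v = 0).
  { apply (lc _ (-(a3-a1)) _ E2). apply (lc _ ((a2-a1)) _ E3).
    apply (lc _ (-(a2-a1)+(a3-a1)) _ E1). ring. }
  apply Rmult_integral in Hu; apply Rmult_integral in Hv.
  destruct Hu as [Hu|Hu]; [contradiction|]. destruct Hv as [Hv|Hv]; [contradiction|].
  subst. lra.
Qed.

Lemma EQ_ext C r v w : (forall k, v k = w k) -> EQ C r v -> EQ C r w.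
Proof. intros H E i j. unfold S2. rewrite <- !H. apply E. Qed.

Lemma transfer_key C1 r1 C2 r2 T b i j :
  EQ C2 r2 b -> EQ C1 r1 (pull T b) ->
  (S2 (fun k => T I1 k * C1 i j k) - S2 (fun a => S2 (fun c => T a i * T c j * C2 a c I1))) * b I1
  + (S2 (fun k => T I2 k * C1 i j k) - S2 (fun a => S2 (fun c => T a i * T c j * C2 a c I2))) * b I2
  + (S2 (fun a => S2 (fun c => T a i * T c j * r2 a c)) - r1 i j) = 0.
Proof.
  intros E2 E1.
  pose proof (E1 i j) as H1.
  pose proof (E2 I1 I1) as H11. pose proof (E2 I1 I2) as H12.
  pose proof (E2 I2 I1) as H21. pose proof (E2 I2 I2) as H22.
  unfold pull, S2 in *. cbv beta in *.
  apply (lc _ (-1) _ H1).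
  apply (lc _ (T I1 i * T I1 j) _ H11).
  apply (lc _ (T I1 i * T I2 j) _ H12).
  apply (lc _ (T I2 i * T I1 j) _ H21).
  apply (lc _ (T I2 i * T I2 j) _ H22).
  ring.
Qed.

Lemma transfer C1 r1 C2 r2 T b1 b2 b3 :
  Dt (b1 I1) (b1 I2) (b2 I1) (b2 I2) (b3 I1) (b3 I2) <> 0 ->
  EQ C2 r2 b1 -> EQ C2 r2 b2 -> EQ C2 r2 b3 ->
  EQ C1 r1 (pull T b1) -> EQ C1 r1 (pull T b2) -> EQ C1 r1 (pull T b3) ->
  T I1 I1 * T I2 I2 - T I1 I2 * T I2 I1 <> 0 -> lin_equiv C1 C2.
Proof.
  intros HD F1 F2 F3 E1 E2 E3 HT. exists T. split; [exact HT|].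
  intros i j m.
  destruct (affine_unique _ _ _ _ _ _ _ _ _ HD
     (transfer_key _ _ _ _ _ _ i j F1 E1)
     (transfer_key _ _ _ _ _ _ i j F2 E2)
     (transfer_key _ _ _ _ _ _ i j F3 E3)) as [Hu [Hv _]].
  destruct m; lra.
Qed.
Lemma EQ_unique C C' r r' a1 b1 a2 b2 a3 b3 :
  Dt a1 b1 a2 b2 a3 b3 <> 0 ->
  EQ C r (vec a1 b1) -> EQ C r (vec a2 b2) -> EQ C r (vec a3 b3) ->
  EQ C' r' (vec a1 b1) -> EQ C' r' (vec a2 b2) -> EQ C' r' (vec a3 b3) ->
  forall i j k, C' i j k = C i j k.
Proof.
  intros HD E1 E2 E3 F1 F2 F3 i j k.
  pose proof (E1 i j); pose proof (E2 i j); pose proof (E3 i j);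
  pose proof (F1 i j); pose proof (F2 i j); pose proof (F3 i j).
  unfold S2, vec in *; cbv beta in *.
  destruct (affine_unique (C' i j I1 - C i j I1) (C' i j I2 - C i j I2) (r i j - r' i j)
     _ _ _ _ _ _ HD) as [Hu [Hv _]]; try lra.
  destruct k; lra.
Qed.

Lemma prod3 t x : t <> 0 -> t <> 1 -> t*(t-1)*x^2 = 0 -> x = 0.
Proof.
  intros h0 h1 H. apply Rmult_integral in H. destruct H as [H|H].
  - apply Rmult_integral in H. destruct H; [contradiction| lra].
  - nra.
Qed.

Lemma noncol C r a1 b1 a2 b2 a3 b3 :
  EQ C r (vec a1 b1) -> EQ C r (vec a2 b2) -> EQ C r (vec a3 b3) ->
  ~(a1=a2/\b1=b2) -> ~(a1=a3/\b1=b3) -> ~(a2=a3/\b2=b3) ->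
  Dt a1 b1 a2 b2 a3 b3 <> 0.
Proof.
  intros E1 E2 E3 n12 n13 n23 HD. unfold Dt in HD.
  assert (Ht : exists t, a3 - a1 = t*(a2-a1) /\ b3 - b1 = t*(b2-b1)).
  { destruct (Req_dec (a2-a1) 0) as [He|He].
    - assert (Hf : b2 - b1 <> 0) by (intro; apply n12; split; lra).
      exists ((b3-b1)/(b2-b1)). split.
      + rewrite He in HD. assert ((a3-a1)*(b2-b1) = 0) by lra.
        apply Rmult_integral in H. destruct H; [|contradiction]. rewrite He, H. ring.
      + field. exact Hf.
    - exists ((a3-a1)/(a2-a1)). split.
      + field. exact He.
      + apply (Rmult_eq_reg_l (a2-a1)); [|exact He].
        field_simplify; [|exact He]. lra. }
  destruct Ht as [t [ha hb]].
  assert (ea : a3 = a1 + t*(a2-a1)) by lra.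
  assert (eb : b3 = b1 + t*(b2-b1)) by lra.
  subst a3 b3.
  assert (t0 : t <> 0) by (intro; subst; apply n13; split; ring).
  assert (t1 : t <> 1) by (intro; subst; apply n23; split; ring).
  pose proof (E1 I1 I1) as A1; pose proof (E2 I1 I1) as A2; pose proof (E3 I1 I1) as A3.
  pose proof (E1 I2 I2) as B1; pose proof (E2 I2 I2) as B2; pose proof (E3 I2 I2) as B3.
  unfold S2, vec in *; cbv beta in *.
  assert (Ha : t*(t-1)*(a2-a1)^2 = 0).
  { apply (lc _ 1 _ A3). apply (lc _ (t-1) _ A1). apply (lc _ (-t) _ A2). ring. }
  assert (Hb : t*(t-1)*(b2-b1)^2 = 0).
  { apply (lc _ 1 _ B3). apply (lc _ (t-1) _ B1). apply (lc _ (-t) _ B2). ring. }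
  apply prod3 in Ha; auto. apply prod3 in Hb; auto. apply n12; split; lra.
Qed.
Ltac unf := cbv beta iota delta [EQ S2 vec pull GammaC Gamma_21 Gamma_20 Gamma_r2 scale_conn Dt].

Lemma case_zero C r at_ bt au bu :
  EQ C r (vec 0 0) -> EQ C r (vec at_ bt) -> EQ C r (vec au bu) ->
  at_*bu - au*bt <> 0 -> lin_equiv C Gamma_20.
Proof.
  intros E1 E2 E3 H.
  set (T := fun m k => match m with I1 => - vec at_ bt k | I2 => vec au bu k end).
  apply (transfer C r Gamma_20 (fun _ _ => 0) T (vec 0 0) (vec (-1) 0) (vec 0 1)).
  - unf; lra.
  - unf; intros i j; destruct i, j; ring.
  - unf; intros i j; destruct i, j; ring.
  - unf; intros i j; destruct i, j; ring.
  - eapply EQ_ext; [|exact E1]. intro k; destruct k; unf; unfold T; simpl; ring.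
  - eapply EQ_ext; [|exact E2]. intro k; destruct k; unf; unfold T; simpl; ring.
  - eapply EQ_ext; [|exact E3]. intro k; destruct k; unf; unfold T; simpl; ring.
  - unfold T, vec. intro; apply H; lra.
Qed.

Lemma case_par C r as_ bs l au bu :
  EQ C r (vec as_ bs) -> EQ C r (vec (l*as_) (l*bs)) -> EQ C r (vec au bu) ->
  l <> 0 -> l <> 1 -> as_*bu - au*bs <> 0 ->
  exists c, c <> -1 /\ c <> 0 /\ lin_equiv C (Gamma_21 c).
Proof.
  intros E1 E2 E3 l0 l1 H.
  assert (hl : l - 1 <> 0) by lra.
  exists (1/(l-1)). split; [|split].
  - intro Hc. apply l0. assert (1 = -1*(l-1)) by (rewrite <- Hc; field; auto). lra.
  - intro Hc. assert (1 = 0*(l-1)) by (rewrite <- Hc; field; auto). lra.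
  - set (c := 1/(l-1)).
    set (T := fun m k => match m with I1 => vec as_ bs k - vec au bu k | I2 => (l-1) * vec as_ bs k end).
    apply (transfer C r (Gamma_21 c) (fun i j => match i, j with I2, I2 => c*(c+1) | _, _ => 0 end)
             T (vec 0 c) (vec 0 (c+1)) (vec (-1) c)).
    + unf; lra.
    + unf; intros i j; destruct i, j; ring.
    + unf; intros i j; destruct i, j; ring.
    + unf; intros i j; destruct i, j; ring.
    + eapply EQ_ext; [|exact E1]. intro k; destruct k; unf; unfold T, c; simpl; field; auto.
    + eapply EQ_ext; [|exact E2]. intro k; destruct k; unf; unfold T, c; simpl; field; auto.
    + eapply EQ_ext; [|exact E3]. intro k; destruct k; unf; unfold T, c; simpl; field; auto.
    + unfold T, vec. intro H'. apply H.
      assert ((l-1)*(as_*bu - au*bs) = 0) by lra.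
      apply Rmult_integral in H0; destruct H0; [contradiction|auto].
Qed.

Lemma div0 x d : x/d = 0 -> d <> 0 -> x = 0.
Proof. intros H Hd. replace x with (x/d*d) by (field; auto). rewrite H; ring. Qed.

Lemma case_gen C r a1 b1 a2 b2 a3 b3 :
  EQ C r (vec a1 b1) -> EQ C r (vec a2 b2) -> EQ C r (vec a3 b3) ->
  a1*b2 - a2*b1 <> 0 -> a1*b3 - a3*b1 <> 0 -> a2*b3 - a3*b2 <> 0 ->
  Dt a1 b1 a2 b2 a3 b3 <> 0 ->
  exists p1 p2 : R, p1 + p2 <> 1 /\ p1 * p2 <> 0 /\ lin_equiv C (Gamma_r2 p1 p2).
Proof.
  intros E1 E2 E3 d12 d13 d23 HD.
  set (d := a1*b2 - a2*b1).
  exists ((a3*b2 - a2*b3)/d), ((a1*b3 - a3*b1)/d).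
  assert (Hs : (a3*b2 - a2*b3)/d + (a1*b3 - a3*b1)/d - 1 <> 0).
  { replace ((a3*b2 - a2*b3)/d + (a1*b3 - a3*b1)/d - 1) with (- Dt a1 b1 a2 b2 a3 b3 / d)
      by (unfold d, Dt; field; auto).
    unfold Rdiv. intro Hz. apply Rmult_integral in Hz. destruct Hz as [Hz|Hz].
    - apply HD; lra.
    - apply Rinv_neq_0_compat in d12. contradiction. }
  split; [|split].
  - intro; apply Hs; lra.
  - intro Hz. apply Rmult_integral in Hz. destruct Hz as [Hz|Hz];
      apply div0 in Hz; auto; lra.
  - set (p1 := (a3*b2 - a2*b3)/d) in *. set (p2 := (a1*b3 - a3*b1)/d) in *.
    set (s := p1 + p2 - 1) in *.
    set (T := fun m k => match m with I1 => vec a1 b1 k | I2 => vec a2 b2 k end).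
    apply (transfer C r (Gamma_r2 p1 p2)
             (fun i j => match i, j with I1, I1 => (p1^2-p1)/s | I2, I2 => (p2^2-p2)/s
                                    | _, _ => p1*p2/s end)
             T (vec 1 0) (vec 0 1) (vec p1 p2)).
    + unf. intro Hz. apply Hs. unfold s. lra.
    + unf; intros i j; destruct i, j; unfold s; field; auto.
    + unf; intros i j; destruct i, j; unfold s; field; auto.
    + unf; intros i j; destruct i, j; unfold s; field; auto.
    + eapply EQ_ext; [|exact E1]. intro k; destruct k; unf; unfold T; simpl; ring.
    + eapply EQ_ext; [|exact E2]. intro k; destruct k; unf; unfold T; simpl; ring.
    + eapply EQ_ext; [|exact E3]. intro k; destruct k; unf; unfold T, p1, p2, d; simpl; field; auto.
    + unfold T, vec. intro; apply d12; lra.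
Qed.
Definition Concl (C : const_conn) : Prop :=
    ((exists p1 p2 : R, p1 + p2 <> 1 /\ p1 * p2 <> 0 /\ lin_equiv C (Gamma_r2 p1 p2)) \/
     (exists c : R, c <> -1 /\ c <> 0 /\ lin_equiv C (Gamma_21 c)) \/
     lin_equiv C Gamma_20).

Lemma classify_dep C r a1 b1 a2 b2 a3 b3 :
  EQ C r (vec a1 b1) -> EQ C r (vec a2 b2) -> EQ C r (vec a3 b3) ->
  ~(a1=a2/\b1=b2) -> Dt a1 b1 a2 b2 a3 b3 <> 0 -> a1*b2 - a2*b1 = 0 -> Concl C.
Proof.
  intros E1 E2 E3 n12 HD H12. unfold Concl.
  destruct (classic (a1 = 0 /\ b1 = 0)) as [[-> ->]|z1].
  { right; right. apply (case_zero C r a2 b2 a3 b3 E1 E2 E3).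
    intro Z; apply HD; unfold Dt; nra. }
  destruct (classic (a2 = 0 /\ b2 = 0)) as [[-> ->]|z2].
  { right; right. apply (case_zero C r a1 b1 a3 b3 E2 E1 E3).
    intro Z; apply HD; unfold Dt; nra. }
  assert (Hl : exists l, a2 = l*a1 /\ b2 = l*b1).
  { destruct (Req_dec a1 0) as [Ha|Ha].
    - assert (Hb : b1 <> 0) by (intro; apply z1; split; auto).
      subst a1. assert (a2 * b1 = 0) by lra.
      apply Rmult_integral in H. destruct H as [H|H]; [|contradiction].
      exists (b2/b1). split; [rewrite H; ring| field; auto].
    - exists (a2/a1). split; [field; auto|].
      apply (Rmult_eq_reg_l a1); [|exact Ha]. field_simplify; [|exact Ha]. lra. }
  destruct Hl as [l [-> ->]].
  right; left. apply (case_par C r a1 b1 l a3 b3 E1 E2 E3).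
  - intro; subst; apply z2; split; ring.
  - intro; subst; apply n12; split; ring.
  - intro Z; apply HD; unfold Dt.
    replace ((l * a1 - a1) * (b3 - b1) - (a3 - a1) * (l * b1 - b1)) with ((l-1)*(a1*b3 - a3*b1)) by ring.
    rewrite Z; ring.
Qed.

Lemma classify C r a1 b1 a2 b2 a3 b3 :
  EQ C r (vec a1 b1) -> EQ C r (vec a2 b2) -> EQ C r (vec a3 b3) ->
  ~(a1=a2/\b1=b2) -> ~(a1=a3/\b1=b3) -> ~(a2=a3/\b2=b3) -> Concl C.
Proof.
  intros E1 E2 E3 n12 n13 n23.
  pose proof (noncol C r a1 b1 a2 b2 a3 b3 E1 E2 E3 n12 n13 n23) as HD.
  destruct (Req_dec (a1*b2 - a2*b1) 0) as [d12|d12].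
  { exact (classify_dep C r a1 b1 a2 b2 a3 b3 E1 E2 E3 n12 HD d12). }
  destruct (Req_dec (a1*b3 - a3*b1) 0) as [d13|d13].
  { apply (classify_dep C r a1 b1 a3 b3 a2 b2 E1 E3 E2 n13); auto.
    intro Z; apply HD; unfold Dt in *; lra. }
  destruct (Req_dec (a2*b3 - a3*b2) 0) as [d23|d23].
  { apply (classify_dep C r a2 b2 a3 b3 a1 b1 E2 E3 E1 n23); auto.
    intro Z; apply HD; unfold Dt in *; lra. }
  left. apply (case_gen C r a1 b1 a2 b2 a3 b3); auto.
Qed.
Lemma Daff p q x : derivable_pt_lim (fun t => p*t + q) x p.
Proof.
  intros eps Heps. exists (mkposreal 1 Rlt_0_1). intros h h0 _.
  replace ((p * (x + h) + q - (p * x + q)) / h - p) with 0 by (field; auto).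
  rewrite Rabs_R0; auto.
Qed.

Lemma Dlin1 a b u v : derivable_pt_lim (fun t => exp (a*t + b*v)) u (a * exp (a*u + b*v)).
Proof.
  replace (a * exp (a*u + b*v)) with (exp (a*u+b*v) * a) by ring.
  apply (derivable_pt_lim_comp (fun t => a*t + b*v) exp).
  - apply (Daff a (b*v)).
  - apply derivable_pt_lim_exp.
Qed.

Lemma Dlin2 a b u v : derivable_pt_lim (fun t => exp (a*u + b*t)) v (b * exp (a*u + b*v)).
Proof.
  replace (b * exp (a*u + b*v)) with (exp (a*u+b*v) * b) by ring.
  apply (derivable_pt_lim_comp (fun t => a*u + b*t) exp).
  - pose proof (Daff b (a*u) v) as H.
    intros eps Heps. destruct (H eps Heps) as [d Hd]. exists d. intros h h0 hh.
    specialize (Hd h h0 hh). cbv beta in *.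
    replace (a*u + b*(v+h)) with (b*(v+h) + a*u) by ring.
    replace (a*u + b*v) with (b*v + a*u) by ring. exact Hd.
  - apply derivable_pt_lim_exp.
Qed.

Lemma DL (f : R -> R) x l c l' : derivable_pt_lim f x l -> l' = c * l ->
  derivable_pt_lim (fun t => c * f t) x l'.
Proof. intros H ->. apply (derivable_pt_lim_scal f c x l H). Qed.

Lemma eq_at O Gam dG a b : in_Q O Gam (expL a b) ->
  (forall i j k l, is_partial O (Gam i j k) l (dG i j k l)) ->
  forall x y, O x y ->
  EQ (fun i j k => Gam i j k x y) (fun i j => ricci_s Gam dG i j x y) (vec a b).
Proof.
  intros [_ HQ] HdG x y Hxy i j.
  set (df := fun k (x y : R) => vec a b k * expL a b x y).
  set (ddf := fun k l (x y : R) => vec a b k * vec a b l * expL a b x y).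
  assert (Hdf : forall k, is_partial O (expL a b) k (df k)).
  { intros k u v _. destruct k; unfold df, vec, expL, linfun.
    - apply Dlin1. - apply Dlin2. }
  assert (Hddf : forall k l, is_partial O (df k) l (ddf k l)).
  { intros k l u v _. destruct l; unfold ddf, df, expL, linfun.
    - eapply DL; [apply Dlin1| simpl; ring].
    - eapply DL; [apply Dlin2| simpl; ring]. }
  pose proof (HQ dG df ddf HdG Hdf Hddf i j x y Hxy) as H.
  unfold hessian, ddf, df, S2 in *. cbv beta in *.
  assert (He : 0 < expL a b x y) by apply exp_pos.
  apply (Rmult_eq_reg_l (expL a b x y)); [|lra].
  rewrite Rmult_0_r, <- H. field.
Qed.

Lemma lin_neq a b a' b' : linfun a b <> linfun a' b' -> ~(a = a' /\ b = b').
Proof. intros H [-> ->]. apply H; reflexivity. Qed.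

Theorem theorem2p5 (O : region) (Gam : connection)
  (hO : open2 O) (hconn : connected2 O) (hM : affine_surface O Gam)
  (a1 b1 a2 b2 a3 b3 : R)
  (h12 : linfun a1 b1 <> linfun a2 b2)
  (h13 : linfun a1 b1 <> linfun a3 b3)
  (h23 : linfun a2 b2 <> linfun a3 b3)
  (hbasis : basis3_of_Q O Gam (expL a1 b1) (expL a2 b2) (expL a3 b3)) :
  exists C : const_conn,
    (forall i j k x y, O x y -> Gam i j k x y = C i j k) /\
    ((exists p1 p2 : R, p1 + p2 <> 1 /\ p1 * p2 <> 0 /\ lin_equiv C (Gamma_r2 p1 p2)) \/
     (exists c : R, c <> -1 /\ c <> 0 /\ lin_equiv C (Gamma_21 c)) \/
     lin_equiv C Gamma_20).
Proof.
  destruct hbasis as [Q1 [Q2 [Q3 [Hind _]]]].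
  destruct (classic (exists x y, O x y)) as [[x0 [y0 H0]] | Hne].
  2:{ exfalso. destruct (Hind 1 0 0) as [H _]; [|lra].
      intros x y Hxy. exfalso. apply Hne. eauto. }
  destruct hM as [_ [Hsm _]].
  assert (hd : forall i j k l, exists g, is_partial O (Gam i j k) l g).
  { intros i j k l. destruct (Hsm i j k) as [_ H]. destruct (H l) as [g [Hg _]]. eauto. }
  set (dG := fun i j k l => proj1_sig (constructive_indefinite_description _ (hd i j k l))).
  assert (HdG : forall i j k l, is_partial O (Gam i j k) l (dG i j k l)).
  { intros. unfold dG. exact (proj2_sig (constructive_indefinite_description _ (hd i j k l))). }
  apply lin_neq in h12, h13, h23.
  set (C := fun i j k => Gam i j k x0 y0).
  pose proof (eq_at _ _ _ _ _ Q1 HdG x0 y0 H0) as E1.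
  pose proof (eq_at _ _ _ _ _ Q2 HdG x0 y0 H0) as E2.
  pose proof (eq_at _ _ _ _ _ Q3 HdG x0 y0 H0) as E3.
  pose proof (noncol _ _ _ _ _ _ _ _ E1 E2 E3 h12 h13 h23) as HD.
  exists C. split.
  - intros i j k x y Hxy.
    exact (EQ_unique _ _ _ _ _ _ _ _ _ _ HD E1 E2 E3
             (eq_at _ _ _ _ _ Q1 HdG x y Hxy) (eq_at _ _ _ _ _ Q2 HdG x y Hxy)
             (eq_at _ _ _ _ _ Q3 HdG x y Hxy) i j k).
  - exact (classify _ _ _ _ _ _ _ _ E1 E2 E3 h12 h13 h23).
Qed.
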